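(* Let $f:\mathbb{R}^n\to\mathbb{R}$ be differentiable and strongly convex, and let $x^0\in\mathbb{R}^n$. For every $\eta>0$ there exists $\tau>0$ such that for every $x\in\mathbb{R}^n$ with $f(x)\le f(x^0)$ and $\|\nabla f(x)\|\ge\eta$ we have $$f(x-t\nabla f(x))\le f(x)-\frac{\eta^2}{2}t\quad\text{for all }t\in[0,\tau].$$
   Context: $\|\cdot\|$ is the Euclidean norm. $f$ is strongly convex with constant $\mu>0$ if $f(tx+(1-t)y)\le tf(x)+(1-t)f(y)-\frac{\mu t(1-t)}{2}\|y-x\|^2$ for all $x,y$ and $t\in[0,1]$. *)

(* Defs.v *)
(* R^n is represented as 'rV[R]_n. *)
From HB Require Import structures.
From mathcomp Require Import all_boot all_order all_algebra.
From mathcomp Require Import all_classical all_reals all_analysis.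
Set Implicit Arguments. Unset Strict Implicit. Unset Printing Implicit Defensive.
Import Order.TTheory GRing.Theory Num.Theory.
Import numFieldNormedType.Exports.
Local Open Scope ring_scope.

(* Euclidean norm on R^n (the library norm on matrices is the sup norm). *)
Definition enorm (R : realType) (n : nat) (v : 'rV[R]_n) : R :=
  Num.sqrt (\sum_(i < n) v ord0 i ^+ 2).

Definition grad (R : realType) (n : nat) (f : 'rV[R]_n -> R) (x : 'rV[R]_n)
  : 'rV[R]_n :=
  \row_(i < n) ('d f x (delta_mx ord0 i : 'rV[R]_n)).

Definition strongly_convex_with (R : realType) (n : nat) (f : 'rV[R]_n -> R)
  (mu : R) : Prop :=
  forall (x y : 'rV[R]_n) (t : R), 0 <= t -> t <= 1 ->
    f (t *: x + (1 - t) *: y)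
      <= t * f x + (1 - t) * f y - mu * t * (1 - t) / 2 * enorm (y - x) ^+ 2.

Definition strongly_convex (R : realType) (n : nat) (f : 'rV[R]_n -> R) : Prop :=
  exists2 mu : R, 0 < mu & strongly_convex_with f mu.

(* Main.v *)
Require Import Defs.
From HB Require Import structures.
From mathcomp Require Import all_boot all_order all_algebra.
From mathcomp Require Import all_classical all_reals all_analysis.
From mathcomp Require Import ring lra.
Import Order.TTheory GRing.Theory Num.Theory.
Import numFieldNormedType.Exports.
Local Open Scope ring_scope.
Local Open Scope classical_set_scope.


Lemma dq {R : realType} {n} (f : 'rV[R]_n -> R) a v : differentiable f a ->
  (fun h : R => h^-1 *: ((f \o shift a) (h *: v) - f a)) @ 0^' --> 'd f a v.
Proof. move=> hd; rewrite -deriveE //; exact: diff_derivable. Qed.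

Definition convexf {R : realType} {n} (f : 'rV[R]_n -> R) :=
  forall x y t, 0 <= t -> t <= 1 -> f (t *: x + (1 - t) *: y) <= t * f x + (1 - t) * f y.

Lemma subgrad {R : realType} {n} (f : 'rV[R]_n -> R) x y :
  convexf f -> differentiable f x -> 'd f x (y - x) <= f y - f x.
Proof.
move=> cf hd.
have sub : ((0:R)^'+ `=>` (0:R)^').
  move=> P /=; rewrite /dnbhs /within /=.
  by apply: filterS => z Pz z0; apply: Pz; rewrite ?gt_eqF.
have := cvg_trans (cvg_app _ sub) (dq _ _ (y - x) hd).
move/cvgr_to_le; apply.
near=> h.
have h0 : 0 < h by near: h; exact: nbhs_right_gt.
have h1 : h <= 1 by apply: ltW; near: h; apply: nbhs_right_lt; exact: ltr01.
rewrite /= /shift.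
have -> : h *: (y - x) + x = h *: y + (1 - h) *: x.
  by rewrite scalerBr scalerBl scale1r addrA addrAC.
have := cf y x h (ltW h0) h1.
set u := f _ => H.
have -> : h^-1 *: (u - f x) = (u - f x) / h by rewrite mulrC.
rewrite ler_pdivrMr //; nra.
Unshelve. all: by end_near. Qed.


Lemma dsum {R : realType} {n} (f : 'rV[R]_n -> R) x v :
  'd f x v = \sum_i v 0 i * grad f x 0 i.
Proof.
rewrite {1}(row_sum_delta v) linear_sum; apply: eq_bigr => i _.
by rewrite linearZ mxE.
Qed.

Lemma contshift {R : realType} {n} (f : 'rV[R]_n -> R) (w z : 'rV[R]_n) e :
  {for w + z, continuous f} -> 0 < e ->
  \forall x \near z, `|f (w + z) - f (w + x)| < e.
Proof.
move=> cf e0.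
have c1 : (fun x => w + x) @ z --> w + z.
  exact: (@cvgD _ _ _ (nbhs z) _ (fun=> w) id w z (cvg_cst w) cvg_id).
have := continuous_comp c1 cf.
by move/cvgrPdist_lt => /(_ e e0).
Qed.

Lemma real_key {R : realType} {s e D P1 P2 Z Z2 M1 M2 Dx : R} :
  0 < s -> 0 < e ->
  `|D - s^-1 * (P1 - Z)| < e / 2 ->
  `|D - (- s)^-1 * (M1 - Z)| < e / 2 ->
  `|P1 - P2| < s * e / 4 -> `|Z - Z2| < s * e / 4 -> `|M1 - M2| < s * e / 4 ->
  s * Dx <= P2 - Z2 -> - s * Dx <= M2 - Z2 -> `|Dx - D| < e.
Proof.
move=> s0 e0 H1 H2 H3 H4 H5 H6 H7.
have E1 : `|s * D - (P1 - Z)| < s * (e / 2).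
  have -> : s * D - (P1 - Z) = s * (D - s^-1 * (P1 - Z)).
    by rewrite mulrBr mulrA mulfV ?gt_eqF // mul1r.
  by rewrite normrM gtr0_norm // ltr_pM2l.
have E2 : `|s * D + (M1 - Z)| < s * (e / 2).
  have -> : s * D + (M1 - Z) = s * (D - (- s)^-1 * (M1 - Z)).
    by rewrite invrN mulNr opprK mulrDr mulrA mulfV ?gt_eqF // mul1r.
  by rewrite normrM gtr0_norm // ltr_pM2l.
move: E1 E2 H3 H4 H5; rewrite !ltr_norml => /andP[E1 E1'] /andP[E2 E2'] /andP[H3 H3'] /andP[H4 H4'] /andP[H5 H5'].
apply/andP; split; nra.
Qed.

Lemma contD {R : realType} {n} (f : 'rV[R]_n -> R)
  (hd : forall x, differentiable f x) (cf : convexf f) z v e : 0 < e ->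
  \forall x \near z, `|'d f x v - 'd f z v| < e.
Proof.
move=> e0.
have e2 : 0 < e / 2 by rewrite divr_gt0.
have e4 : forall s, 0 < s -> 0 < s * e / 4.
  by move=> s s0; rewrite divr_gt0 // mulr_gt0.
have := dq f z v (hd z); move/cvgrPdist_lt => /(_ (e/2) e2).
rewrite near_withinE => /nbhs_ballP [d /= d0 Hd].
pose s := d / 2.
have s0 : 0 < s by rewrite divr_gt0.
have sd : `|s| < d by rewrite gtr0_norm // /s ltr_pdivrMr // ltr_pMr // ltr1n.
have Hs := Hd s.
have Hms := Hd (- s).
rewrite -ball_normE /ball_ /= sub0r normrN in Hs.
rewrite -ball_normE /ball_ /= sub0r opprK in Hms.
have {}Hs := Hs sd (lt0r_neq0 s0).
have ms0 : - s != 0 by rewrite oppr_eq0 gt_eqF.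
have {}Hms := Hms sd ms0.
have c1 := contshift f _ _ _ (differentiable_continuous (hd (s *: v + z))) (e4 s s0).
have c2 := contshift f _ _ _ (differentiable_continuous (hd ((- s) *: v + z))) (e4 s s0).
have c3 : \forall x \near z, `|f z - f x| < s * e / 4.
  by move: (differentiable_continuous (hd z)) => /cvgrPdist_lt /(_ _ (e4 s s0)).
near=> x.
have L1 := subgrad f x (s *: v + x) cf (hd x).
have L2 := subgrad f x ((- s) *: v + x) cf (hd x).
rewrite addrK linearZ in L1.
rewrite addrK linearZ in L2.
have Hs' : `|'d f z v - s^-1 * (f (s *: v + z) - f z)| < e / 2 := Hs.
have Hms' : `|'d f z v - (- s)^-1 * (f ((- s) *: v + z) - f z)| < e / 2 := Hms.
have L1' : s * 'd f x v <= f (s *: v + x) - f x := L1.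
have L2' : (- s) * 'd f x v <= f ((- s) *: v + x) - f x := L2.
apply: (real_key s0 e0 Hs' Hms' _ _ _ L1' L2').
- exact: (near c1 x).
- exact: (near c3 x).
- exact: (near c2 x).
Unshelve. all: by end_near. Qed.


Lemma single_le_sum {R : realType} {n} (F : 'I_n -> R) i :
  (forall j, 0 <= F j) -> F i <= \sum_j F j.
Proof.
move=> F0; rewrite (bigD1 i) //= lerDl; apply: sumr_ge0 => j _; exact: F0.
Qed.

Lemma inner_lb {R : realType} {n} {a b c : 'I_n -> R} {eps eta : R} :
  (forall i, `|b i - a i| < eps) -> (forall i, `|c i - a i| < eps) ->
  eta ^+ 2 <= \sum_i b i ^+ 2 -> 4 * n%:R * eps ^+ 2 <= eta ^+ 2 / 4 ->
  eta ^+ 2 / 2 <= \sum_i b i * c i.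
Proof.
move=> hb hc hs he.
have H1 : \sum_i (3/4 * b i ^+ 2 - 4 * eps ^+ 2) <= \sum_i b i * c i.
  apply: ler_sum => i _.
  have := hb i; have := hc i; rewrite !ltr_norml => /andP[c1 c2] /andP[b1 b2].
  have hd : (c i - b i) ^+ 2 <= 4 * eps ^+ 2.
    have hd1 : - (2 * eps) <= c i - b i by lra.
    have hd2 : c i - b i <= 2 * eps by lra.
    nra.
  have := sqr_ge0 (b i / 2 + (c i - b i)).
  nra.
move: H1; rewrite sumrB -mulr_sumr sumr_const card_ord => H1.
have : 3/4 * eta ^+ 2 <= 3/4 * \sum_i b i ^+ 2 by rewrite ler_pM2l.
rewrite -[4 * eps ^+ 2 *+ n]mulr_natr in H1.
nra.
Qed.

Lemma rv_norm_le {R : realType} {n} {u : 'rV[R]_n} {M : R} :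
  0 <= M -> (forall i, `|u 0 i| <= M) -> `|u| <= M.
Proof.
move=> M0 H; rewrite /Num.norm /= mx_normrE; apply/bigmax_leP; split => // -[i j] _ /=.
by rewrite (ord1 i); exact: H.
Qed.

Lemma local {R : realType} {n} (f : 'rV[R]_n -> R)
  (hd : forall x, differentiable f x) (cf : convexf f) (eta : R) (heta : 0 < eta) (z : 'rV[R]_n) :
  \forall x \near z & tau \near (0:R)^'+,
    (eta <= enorm (grad f x) -> forall t : R, 0 <= t -> t <= tau ->
       f (x - t *: grad f x) <= f x - eta ^+ 2 / 2 * t).
Proof.
pose eps := eta / (4 * n.+1%:R).
have eps0 : 0 < eps by rewrite divr_gt0 // mulr_gt0.
have G : \forall w \near z, forall i : 'I_n, `|'d f w 'e_i - 'd f z 'e_i| < eps.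
  have := (filter_forall _ (fun i : 'I_n => contD f hd cf z 'e_i _ eps0)).
  by apply; apply: nbhs_filter.
move/nbhs_ballP: G => [d /= d0 Hd].
pose M := \sum_i `|grad f z 0 i| + eps.
have M0 : 0 <= M.
  apply: addr_ge0; last exact: ltW.
  by apply: sumr_ge0 => i _.
pose tau0 := d / 2 / (M + 1).
have tau00 : 0 < tau0 by rewrite !divr_gt0 // ltr_wpDl.
have tauM : tau0 * (M + 1) = d / 2 by rewrite /tau0 mulfVK // gt_eqF // ltr_wpDl.
exists (ball z (d / 2), [set tau | tau < tau0]) => /=.
  split; first by apply/nbhs_ballP; exists (d / 2) => //=; rewrite divr_gt0.
  exact: nbhs_right_lt.
move=> [x tau] /= [xb taub] heg t t0 tt.
rewrite -ball_normE /ball_ /= in xb.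
have hdd : d / 2 < d by rewrite ltr_pdivrMr // ltr_pMr // ltr1n.
have Gx := Hd x.
rewrite -ball_normE /ball_ /= in Gx.
have {}Gx := Gx (lt_trans xb hdd).
have tri : forall a b : R, `|a| <= `|a - b| + `|b|.
  by move=> a b; rewrite -{1}(subrK b a) ler_normD.
have gxb : forall i, `|grad f x 0 i| <= M.
  move=> i; rewrite [grad f x 0 i]mxE.
  apply: (le_trans (tri _ ('d f z 'e_i))); rewrite addrC /M.
  apply: lerD; last exact: ltW (Gx i).
  have -> : 'd f z 'e_i = grad f z 0 i by rewrite mxE.
  exact: (single_le_sum (fun j => `|grad f z 0 j|) i (fun j => normr_ge0 _)).
have ngx : `|grad f x| <= M := rv_norm_le M0 gxb.
set y := x - t *: grad f x.
have yb : `|z - y| < d.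
  rewrite /y opprD opprK addrA.
  apply: (le_lt_trans (ler_normD _ _)).
  rewrite normrZ (ger0_norm t0).
  have : t * `|grad f x| <= tau0 * M.
    exact: (ler_pM t0 (normr_ge0 _) (le_trans tt (ltW taub)) ngx).
  have hb : tau0 * M <= d / 2 by rewrite -tauM ler_pM2l // lerDl.
  move: (t * _) (tau0 * M) hb xb => a b hb xb ha; lra.
have Gy := Hd y.
rewrite -ball_normE /ball_ /= in Gy.
have {}Gy := Gy yb.
have L := subgrad f y x cf (hd y).
have exy : x - y = t *: grad f x by rewrite /y opprB addrC subrK.
rewrite exy linearZ dsum in L.
have L' : t * (\sum_i grad f x 0 i * grad f y 0 i) <= f x - f y := L.
have gE : forall w i, grad f w 0 i = 'd f w 'e_i by move=> w i; rewrite mxE.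
have hbx : forall i, `|grad f x 0 i - grad f z 0 i| < eps.
  move=> i; have -> : grad f x 0 i - grad f z 0 i = 'd f x 'e_i - 'd f z 'e_i.
    by congr (_ - _); apply: gE.
  exact: (Gx i).
have hby : forall i, `|grad f y 0 i - grad f z 0 i| < eps.
  move=> i; have -> : grad f y 0 i - grad f z 0 i = 'd f y 'e_i - 'd f z 'e_i.
    by congr (_ - _); apply: gE.
  exact: (Gy i).
have I : eta ^+ 2 / 2 <= \sum_i grad f x 0 i * grad f y 0 i.
  apply: (inner_lb hbx hby).
  - move: heg; rewrite /enorm => heg.
    have S0 : 0 <= \sum_(i < n) grad f x 0 i ^+ 2.
      by apply: sumr_ge0 => i _; exact: sqr_ge0.
    rewrite -(sqr_sqrtr S0) !expr2.
    exact: (ler_pM (ltW heta) (ltW heta) heg heg).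
  - have ee : eps * (4 * n.+1%:R) = eta by rewrite /eps mulfVK // gt_eqF // mulr_gt0.
    have -> : eta ^+ 2 = 16 * (n%:R + 1) ^+ 2 * eps ^+ 2.
      by rewrite -ee -natr1; ring.
    have nn : 0 <= n%:R :> R by [].
    move: (eps ^+ 2) (sqr_ge0 eps) (n%:R : R) nn => e2 he2 N hN.
    nra.
have ht : t * (eta ^+ 2 / 2) <= t * (\sum_i grad f x 0 i * grad f y 0 i).
  exact: ler_wpM2l.
rewrite [eta ^+ 2 / 2 * t]mulrC.
move: (t * (eta ^+ 2 / 2)) (t * (\sum_i _)) ht L' => a b ht L'.
lra.
Qed.


Lemma sum_bound {R : realType} {n} (a g : 'I_n -> R) (mu : R) : 0 < mu ->
  mu / 8 * \sum_i a i ^+ 2 <= - (1 / 2) * \sum_i a i * g i ->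
  mu ^+ 2 * \sum_i a i ^+ 2 <= 16 * \sum_i g i ^+ 2.
Proof.
move=> mu0 H.
have P : \sum_i (- (mu ^+ 2 / 8) * a i ^+ 2 - 2 * g i ^+ 2) <= \sum_i mu * (a i * g i).
  apply: ler_sum => i _.
  have := sqr_ge0 (g i + mu * a i / 4).
  nra.
move: P; rewrite sumrB -!mulr_sumr.
move: (\sum_i a i ^+ 2) (\sum_i a i * g i) (\sum_i g i ^+ 2) H => A Pp G H P.
nra.
Qed.

Lemma convex_of_sc {R : realType} {n} (f : 'rV[R]_n -> R) :
  strongly_convex f -> convexf f.
Proof.
move=> [mu mu0 hmu] x y t t0 t1.
apply: (le_trans (hmu x y t t0 t1)).
rewrite lerBlDr lerDl.
apply: mulr_ge0; last exact: sqr_ge0.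
apply: mulr_ge0 => //; apply: mulr_ge0; last by rewrite subr_ge0.
by apply: mulr_ge0 => //; exact: ltW.
Qed.

Lemma sublevel_bounded {R : realType} {n} (f : 'rV[R]_n -> R)
  (hd : forall x, differentiable f x) (hsc : strongly_convex f) (x0 : 'rV[R]_n) :
  exists B : R, forall x, f x <= f x0 -> `|x| <= B.
Proof.
have cf := convex_of_sc f hsc; move: hsc => [mu mu0 hmu].
pose G := \sum_i grad f x0 0 i ^+ 2.
pose C := 16 * G / mu ^+ 2.
exists (`|x0| + (1 + C)) => x hx.
pose a := fun i => (x - x0) 0 i.
have A : mu ^+ 2 * \sum_i a i ^+ 2 <= 16 * G.
  suff P : mu / 8 * \sum_i a i ^+ 2 <= - (1 / 2) * \sum_i a i * grad f x0 0 i.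
    exact: (sum_bound a (fun i => grad f x0 0 i) mu mu0 P).
  have h1 := hmu x x0 (1/2).
  have q0 : 0 <= 1 / 2 :> R by rewrite divr_ge0.
  have q1 : 1 / 2 <= 1 :> R by rewrite ler_pdivrMr // mul1r ler1n.
  have {}h1 := h1 q0 q1.
  set w := (1/2) *: x + (1 - 1/2) *: x0 in h1.
  have h2 := subgrad f x0 w cf (hd x0).
  have ew : w - x0 = (1/2) *: (x - x0).
    rewrite /w scalerBr scalerBl scale1r.
    by rewrite addrCA [x0 + _]addrC addrK.
  rewrite ew linearZ dsum in h2.
  have h2' : 1 / 2 * (\sum_i (x - x0) 0 i * grad f x0 0 i) <= f w - f x0 := h2.
  have en : enorm (x0 - x) ^+ 2 = \sum_i a i ^+ 2.
    rewrite /enorm sqr_sqrtr; last by apply: sumr_ge0 => i _; exact: sqr_ge0.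
    apply: eq_bigr => i _; rewrite /a -[x0 - x]opprB; rewrite mxE sqrrN; congr (_ ^+ 2); congr (_ _ _); exact: val_inj.
  rewrite en in h1.
  have em : mu * (1 / 2) * (1 - 1 / 2) / 2 * \sum_i a i ^+ 2 = mu / 8 * \sum_i a i ^+ 2.
    by field.
  rewrite em in h1.
  move: (mu / 8 * _) (\sum_i (x - x0) 0 i * grad f x0 0 i) h1 h2' => X Y h1 h2'.
  rewrite /a /=.
  lra.
have G0 : 0 <= G by apply: sumr_ge0 => i _; exact: sqr_ge0.
have C0 : 0 <= C.
  by rewrite /C; apply: divr_ge0; [apply: mulr_ge0 | apply: exprn_ge0; exact: ltW].
have ha : forall i, `|a i| <= 1 + C.
  move=> i.
  have s1 : a i ^+ 2 <= \sum_j a j ^+ 2 := single_le_sum (fun j => a j ^+ 2) i (fun j => sqr_ge0 _).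
  have s2 : \sum_j a j ^+ 2 <= C.
    by rewrite /C ler_pdivlMr ?exprn_gt0 // [_ * mu ^+ 2]mulrC.
  have s3 : `|a i| <= 1 + a i ^+ 2.
    rewrite -real_normK ?num_real //; have := normr_ge0 (a i); move: `|a i| => u u0; nra.
  lra.
have hxx : `|x - x0| <= 1 + C.
  apply: rv_norm_le; first by rewrite addr_ge0.
  exact: ha.
have := ler_normD x0 (x - x0); rewrite addrC subrK => H.
by apply: (le_trans H); rewrite lerD2l.
Qed.


Theorem proposition5 (R : realType) (n : nat) (f : 'rV[R]_n -> R)
  (hdiff : forall x : 'rV[R]_n, differentiable f x)
  (hsc : strongly_convex f) (x0 : 'rV[R]_n) (eta : R) (heta : 0 < eta) :
  exists2 tau : R, 0 < tau &
    forall x : 'rV[R]_n, f x <= f x0 -> eta <= enorm (grad f x) ->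
      forall t : R, 0 <= t -> t <= tau ->
        f (x - t *: grad f x) <= f x - eta ^+ 2 / 2 * t.
Proof.
have cf := convex_of_sc f hsc.
pose S := [set x : 'rV[R]_n | f x <= f x0]%classic.
have clS : closed S.
  apply: (@preimage_closed _ _ f [set r : R | r <= f x0]%classic).
    by move=> x _; exact: differentiable_continuous.
  exact: closed_le.
have [B hB] := sublevel_bounded f hdiff hsc x0.
have bS : bounded_set S.
  rewrite /= /bounded_near.
  near=> M => x Sx.
  apply: (le_trans (hB x Sx)).
  near: M; apply: nbhs_pinfty_ge; exact: num_real.
have cS : compact S := bounded_closed_compact bS clS.
have := (compact_near_coveringP S).1 cS R (0:R)^'+
  (fun tau x => eta <= enorm (grad f x) -> forall t : R, 0 <= t -> t <= tau ->
       f (x - t *: grad f x) <= f x - eta ^+ 2 / 2 * t) _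
  (fun z _ => local f hdiff cf eta heta z).
move=> H.
have : \forall tau \near (0:R)^'+, 0 < tau /\
   (S `<=` (fun x => eta <= enorm (grad f x) -> forall t : R, 0 <= t -> t <= tau ->
       f (x - t *: grad f x) <= f x - eta ^+ 2 / 2 * t))%classic.
  near=> tau; split; first by near: tau; exact: nbhs_right_gt.
  by near: tau; exact: H.
move/filter_ex => [tau [tau0 Htau]].
by exists tau => // x hx; exact: Htau.
Unshelve. all: by end_near. Qed.
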